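(* Assume $S(w)\neq\emptyset$ for all $w\in\mathbb R^m$ and that $x\mapsto\max_{i}(f_i(x)-w_i)$ satisfies the growth property uniformly along approximating sequences. Let $w^*\in\mathbb R^m$ and $(w^k)_{k\ge0}\subseteq\mathbb R^m$ with $w^k\to w^*$. Then $(S(w^k))_{k\ge0}$ is Mosco convergent to $S(w^* )$.
   Context: $\mathcal H$ is a real Hilbert space; $f_1,\dots,f_m:\mathcal H\to\mathbb R$ are convex and continuously differentiable. For $w\in\mathbb R^m$, $S(w):=\operatorname{argmin}_{z\in\mathcal H}\max_{i=1,\dots,m}(f_i(z)-w_i)$ (a closed convex set). Growth property uniformly along approximating sequences: for every $w^*\in\mathbb R^m$ there is a strictly increasing $\psi:[0,\infty)\to[0,\infty)$ with $\psi(0)=0$ such that for every sequence $(w^k)\subseteq\mathbb R^m$ with $w^k\to w^*$, $\max_i(f_i(x^* )-w^k_i)-\inf_{z\in\mathcal H}\max_i(f_i(z)-w^k_i)\ge\psi(\operatorname{dist}(x^*,S(w^k)))$ for all $x^*\in S(w^* )$ and all $k\ge0$. Mosco convergence: nonempty closed convex sets $C^k$ are Mosco convergent to a nonempty closed convex $C^*$ if (i) for every $x^*\in C^*$ there exist $x^k\in C^k$ with $x^k\to x^*$ strongly, and (ii) whenever $(k_l)$ is a subsequence, $x^{k_l}\in C^{k_l}$ and $x^{k_l}\rightharpoonup x^*$ weakly, then $x^*\in C^*$. *)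

(* Defs.v *)
From HB Require Import structures.
From mathcomp Require Import all_boot all_order all_algebra.
From mathcomp Require Import all_classical all_reals all_analysis.
Set Implicit Arguments. Unset Strict Implicit. Unset Printing Implicit Defensive.
Import Order.TTheory GRing.Theory Num.Theory.
Import numFieldNormedType.Exports.
Local Open Scope classical_set_scope.
Local Open Scope ring_scope.

Section Defs.
Context {R : realType} {V : completeNormedModType R}.

(* [ip] is an inner product inducing the norm of V: together with the
   completeness of V this makes (V, ip) a real Hilbert space. *)
Definition is_hilbert_inner (ip : V -> V -> R) : Prop :=
  [/\ (forall x y, ip x y = ip y x),
      (forall a x y z, ip (a *: x + y) z = a * ip x z + ip y z) &
      (forall x, ip x x = `|x| ^+ 2)].

Definition convex_fun (f : V -> R) : Prop :=
  forall x y (t : R), 0 <= t <= 1 ->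
    f (t *: x + (1 - t) *: y) <= t * f x + (1 - t) * f y.

Definition cont_diff (f : V -> R) : Prop :=
  (forall x, differentiable f x) /\
  (forall x (e : R), 0 < e -> exists2 d : R, 0 < d &
     forall y, `|y - x| < d -> forall h, `|'d f y h - 'd f x h| <= e * `|h|).

(* max_{i} (f_i z - w_i), m >= 1 assumed in the theorem *)
Definition maxfun (m : nat) (f : 'I_m -> V -> R) (w : 'I_m -> R) (z : V) : R :=
  fine (\big[Order.max/-oo%E]_(i < m) ((f i z - w i)%:E)).

Definition Sset (m : nat) (f : 'I_m -> V -> R) (w : 'I_m -> R) : set V :=
  [set x | forall z, maxfun f w x <= maxfun f w z].

Definition infval (m : nat) (f : 'I_m -> V -> R) (w : 'I_m -> R) : R :=
  inf (range (maxfun f w)).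

Definition distset (x : V) (C : set V) : R := inf [set `|x - y| | y in C].

Definition weak_cvg (ip : V -> V -> R) (u : nat -> V) (x : V) : Prop :=
  forall y, (fun k => ip (u k) y) @ \oo --> ip x y.

Definition mosco_cvg (ip : V -> V -> R) (C : nat -> set V) (Cs : set V) : Prop :=
  (forall x, Cs x -> exists2 u : nat -> V, (forall k, C k (u k)) & u @ \oo --> x) /\
  (forall (kk : nat -> nat) (u : nat -> V) (x : V),
     (forall n, (kk n < kk n.+1)%N) ->
     (forall n, C (kk n) (u n)) -> weak_cvg ip u x -> Cs x).

Definition growth_uniform (m : nat) (f : 'I_m -> V -> R) : Prop :=
  forall ws : 'I_m -> R, exists psi : R -> R,
    [/\ psi 0 = 0,
        (forall s, 0 <= s -> 0 <= psi s),
        (forall s t, 0 <= s -> s < t -> psi s < psi t) &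
        forall w : nat -> 'I_m -> R, (forall i, (fun k => w k i) @ \oo --> ws i) ->
          forall xs, Sset f ws xs -> forall k,
            maxfun f (w k) xs - infval f (w k) >= psi (distset xs (Sset f (w k)))].

End Defs.

(* Main.v *)
Require Import Defs.
From HB Require Import structures.
From mathcomp Require Import all_boot all_order all_algebra.
From mathcomp Require Import all_classical all_reals all_analysis.
From mathcomp Require Import ring lra.
Import Order.TTheory GRing.Theory Num.Def Num.Theory.
Import numFieldNormedType.Exports.
Local Open Scope classical_set_scope.
Local Open Scope ring_scope.

Lemma small_inv (R : realType) (e : R) : 0 < e -> exists N, forall n, (N <= n)%N -> n.+1%:R^-1 < e.
Proof.
move=> e0; exists (truncn e^-1) => n Nn.
rewrite -ltf_pV2 ?posrE ?invr_gt0 // invrK.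
apply: (lt_le_trans (truncnS_gt _)); by rewrite ler_nat.
Qed.

Lemma quad0 (R : realType) (a b : R) : (forall t, 0 <= t * a + t ^+ 2 * b) -> a = 0.
Proof.
move=> H; apply/eqP; apply: contraT => na.
pose c := `|b| + 1.
have c0 : 0 < c by rewrite /c; have := normr_ge0 b; lra.
have bc : b <= c by rewrite /c; have := ler_norm b; lra.
have := H (- a / (2 * c)).
have E : - a / (2 * c) * a + (- a / (2 * c)) ^+ 2 * b = (- 2 * c * a ^+ 2 + b * a ^+ 2) / (4 * c ^+ 2).
  by field; rewrite ?lt0r_neq0.
rewrite E pmulr_lge0; last by rewrite invr_gt0; apply: mulr_gt0 => //; apply: exprn_gt0.
have a2 : 0 < a ^+ 2 by rewrite exprn_even_gt0.
nra.
Qed.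

Section Hilb.
Context {R : realType} {V : completeNormedModType R} (ip : V -> V -> R).
Hypothesis Hip : is_hilbert_inner ip.

Lemma ipC x y : ip x y = ip y x. Proof. by case: Hip. Qed.
Lemma ipDl x y z : ip (x + y) z = ip x z + ip y z.
Proof. case: Hip => _ H _; have := H 1 x y z; by rewrite scale1r mul1r. Qed.
Lemma ip0l z : ip 0 z = 0.
Proof. have := ipDl 0 0 z; rewrite addr0 => H; lra. Qed.
Lemma ipZl a x z : ip (a *: x) z = a * ip x z.
Proof. case: Hip => _ H _; have := H a x 0 z; by rewrite addr0 ip0l addr0. Qed.
Lemma ipNl x z : ip (- x) z = - ip x z.
Proof. by rewrite -scaleN1r ipZl mulN1r. Qed.
Lemma ipBl x y z : ip (x - y) z = ip x z - ip y z.
Proof. by rewrite ipDl ipNl. Qed.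
Lemma ipDr x y z : ip z (x + y) = ip z x + ip z y.
Proof. by rewrite ipC ipDl !(ipC z). Qed.
Lemma ipZr a x z : ip z (a *: x) = a * ip z x.
Proof. by rewrite ipC ipZl ipC. Qed.
Lemma ipBr x y z : ip z (x - y) = ip z x - ip z y.
Proof. by rewrite ipC ipBl !(ipC z). Qed.
Lemma ipnorm x : ip x x = `|x| ^+ 2. Proof. by case: Hip. Qed.

Lemma riesz (L : V -> R) (M : R) :
  (forall x y, L (x + y) = L x + L y) -> (forall a x, L (a *: x) = a * L x) ->
  (forall y, `|L y| <= M * `|y|) -> exists g, forall h, L h = ip g h.
Proof.
move=> LD LZ LM.
have LB x y : L (x - y) = L x - L y.
  by rewrite LD -scaleN1r LZ mulN1r.
pose J y := ip y y / 2 - L y.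
have Jlb y : - (M ^+ 2) / 2 <= J y.
  rewrite /J ipnorm; have := LM y; have := ler_norm (L y); have := normr_ge0 y.
  have := sqr_ge0 (`|y| - M); nra.
pose mu := inf (range J).
have hlb : has_lbound (range J) by exists (- (M ^+ 2) / 2) => _ [y _ <-].
have muJ y : mu <= J y by apply: ge_inf => //; exists y.
have ex n : exists y, J y < mu + n.+1%:R^-1.
  have : inf (range J) < mu + n.+1%:R^-1 by rewrite ltrDl invr_gt0.
  by move/inf_lt => [| _ [y _ <-] Hy]; [exists (J 0), 0 | exists y].
have [ys Hys] := choice ex.
have cau n k : `|ys n - ys k| ^+ 2 <= 4 * (n.+1%:R^-1 + k.+1%:R^-1).
  have := muJ (2^-1 *: (ys n + ys k)); have := Hys n; have := Hys k.
  rewrite /J -ipnorm !ipBl !ipBr !ipZl !ipZr !ipDl !ipDr (ipC (ys k) (ys n)).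
  rewrite LZ LD.
  move: (ip (ys n) (ys n)) (ip (ys k) (ys k)) (ip (ys n) (ys k)) (L (ys n)) (L (ys k)) => A B C La Lb.
  move: (n.+1%:R^-1) (k.+1%:R^-1) => en ek; lra.
have Hex : cauchy_ex (ys @ \oo).
  move=> e e0.
  have e2 : 0 < e ^+ 2 / 8 by rewrite divr_gt0 // exprn_gt0.
  have [N HN] := @small_inv _ _ e2.
  exists (ys N); exists N => // n /= Nn.
  rewrite -ball_normE /ball_ /=.
  have := cau N n; have := HN N (leqnn N); have := HN n Nn.
  have := normr_ge0 (ys N - ys n).
  move: (N.+1%:R^-1) (n.+1%:R^-1) (`|ys N - ys n|) => a b x; nra.
have Hc : cvg (ys @ \oo) by apply: cauchy_cvg; apply: cauchy_exP.
set g := lim (ys @ \oo) in Hc.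
have Jg : J g <= mu.
  apply/ler_addgt0Pr => e e0.
  pose K := `|g| + 2 + `|M|.
  have K0 : 0 < K by rewrite /K; have := normr_ge0 g; have := normr_ge0 M; lra.
  pose d := Num.min 1 (e / (2 * K)).
  have d0 : 0 < d by rewrite /d lt_min ltr01 divr_gt0 // mulr_gt0.
  have := (cvgrPdist_lt _ _).1 Hc d d0. move=> [N1 _ HN1].
  have e2 : 0 < e / 2 by rewrite divr_gt0.
  have [N2 HN2] := @small_inv _ _ e2.
  have h1 := HN1 (maxn N1 N2) (leq_maxl _ _).
  have h2 := HN2 (maxn N1 N2) (leq_maxr _ _).
  have h3 := Hys (maxn N1 N2).
  move: h1 h2 h3; set y := ys (maxn N1 N2); move=> h1 h2 h3.
  have t1 : `|g - y| <= 1 by apply: ltW; apply: (lt_le_trans h1); rewrite /d ge_min lexx.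
  have t2 : `|g - y| * K <= e / 2.
    have : `|g - y| <= e / (2 * K) by apply: ltW; apply: (lt_le_trans h1); rewrite /d ge_min lexx orbT.
    rewrite ler_pdivlMr ?mulr_gt0 //; nra.
  have n1 : `|y| <= `|g| + `|g - y|.
    by have := ler_normD g (y - g); rewrite subrKC distrC.
  have n2 : `|g| <= `|y| + `|g - y|.
    by have := ler_normD y (g - y); rewrite subrKC.
  have lm : - (`|M| * `|g - y|) <= L g - L y.
    rewrite -LB; have := LM (g - y); have := ler_norm M; have := normr_ge0 (g - y).
    have := ler_norm (- L (g - y)); rewrite normrN.
    nra.
  move: h3 h2; rewrite /J !ipnorm => h3 h2.
  have := normr_ge0 g; have := normr_ge0 y; have := normr_ge0 (g - y).
  rewrite /K in t2; have := normr_ge0 M.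
  move: (L g) (L y) (`|g|) (`|y|) (`|g - y|) ((maxn N1 N2).+1%:R^-1) lm n1 n2 t1 t2 h2 h3 => Lg Ly a b t en.
  rewrite /K.
  intros.
  have : 0 <= (b + t - a) * (a + b) by apply: mulr_ge0; lra.
  have : 0 <= t * (1 - t) by apply: mulr_ge0; lra.
  nra.
exists g => h; apply/eqP; rewrite eq_sym -subr_eq0; apply/eqP.
apply: (@quad0 _ _ (ip h h / 2)) => t.
have := muJ (g + t *: h); have := Jg.
rewrite /J LD LZ !ipDl !ipDr !ipZl !ipZr (ipC h g).
move: (ip g g) (ip g h) (ip h h) (L g) (L h) => A B C La Lb; lra.
Qed.
End Hilb.

Lemma conv_grad (R : realType) (V : completeNormedModType R) (f : V -> R) x y :
  convex_fun f -> differentiable f x -> f x + 'd f x (y - x) <= f y.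
Proof.
move=> cf df.
have [oo [Ho Hlo]] : exists oo : V -> R, (forall h, f (h + x) = f x + 'd f x h + oo h)
   /\ (forall eps : R, 0 < eps -> \forall h \near (0:V), `|oo h| <= eps * `|h|).
  by eexists; split; [exact: (diff_locallyx df) | apply: littleoP].
apply/ler_addgt0Pr => e e0.
set z := y - x.
pose eps := e / (`|z| + 1).
have z1 : 0 < `|z| + 1 by have := normr_ge0 z; lra.
have eps0 : 0 < eps by rewrite divr_gt0.
have := Hlo eps eps0; move/nbhs_norm0P => [del /= del0 Hdel].
pose t := Num.min 1 (del / (2 * (`|z| + 1))).
have t0 : 0 < t by rewrite /t lt_min ltr01 divr_gt0 // mulr_gt0.
have t1 : t <= 1 by rewrite /t ge_min lexx.
have t2 : t * (`|z| + 1) <= del / 2.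
  have : t <= del / (2 * (`|z| + 1)) by rewrite /t ge_min lexx orbT.
  rewrite ler_pdivlMr ?mulr_gt0 //; nra.
have Htz : `|t *: z| < del.
  rewrite normrZ gtr0_norm //; have := normr_ge0 z; nra.
have := Hdel _ Htz; rewrite /= normrZ gtr0_norm // => Hot.
have tt01 : 0 <= t <= 1 by rewrite ltW.
have conv := cf y x t tt01.
have E : t *: y + (1 - t) *: x = t *: z + x.
  by rewrite /z scalerBl scale1r scalerBr addrCA addrC.
rewrite E Ho linearZ /= -[t *: (@diff _ _ _ _ _ _ _)]/(t * _) in conv.
have := ler_norm (- oo (t *: z)); rewrite normrN => Hn.
have Heps : eps * `|z| <= e.
  rewrite /eps mulrAC ler_pdivrMr //; have := normr_ge0 z; nra.
move: conv Hot Hn Heps; move: ('d f x z) (oo (t *: z)) (`|oo (t *: z)|) (`|z|) => Lz oz noz nz.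
intros.
have : Lz <= f y - f x + eps * nz.
  have : t * Lz <= t * (f y - f x + eps * nz) by nra.
  by rewrite ler_pM2l.
lra.
Qed.

Section Main.
Context {R : realType} {V : completeNormedModType R} (m : nat) (f : 'I_m -> V -> R).
Hypothesis m0 : (0 < m)%N.

Lemma mf_ex (w : 'I_m -> R) z : exists i, maxfun f w z = f i z - w i /\
  forall j, f j z - w j <= f i z - w i.
Proof.
have [i0 _ Hi0] := @eq_bigmax _ _ _ (-oo%E) (Ordinal m0) xpredT
  (fun i => (f i z - w i)%:E) isT (fun i _ => leNye _).
exists i0; split; first by rewrite /maxfun Hi0.
move=> j; rewrite -lee_fin -Hi0.
exact: (le_bigmax (-oo%E) (fun i => (f i z - w i)%:E) j).
Qed.

Lemma mf_ge (w : 'I_m -> R) z j : f j z - w j <= maxfun f w z.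
Proof. by have [i [-> H]] := mf_ex w z; apply: H. Qed.

Lemma mf_close (w w' : 'I_m -> R) z :
  maxfun f w z <= maxfun f w' z + \sum_i `|w i - w' i|.
Proof.
have [i [-> _]] := mf_ex w z.
have H1 := mf_ge w' z i.
have H2 : `|w i - w' i| <= \sum_i `|w i - w' i|.
  rewrite (bigD1 i) //= lerDl; apply: sumr_ge0 => j _; exact: normr_ge0.
have := ler_norm (w' i - w i); rewrite distrC.
lra.
Qed.

Lemma infval_min (w : 'I_m -> R) y : Sset f w y -> infval f w = maxfun f w y.
Proof.
move=> Hy; apply/eqP; rewrite eq_le; apply/andP; split.
  apply: ge_inf; last by exists y.
  by exists (maxfun f w y) => _ [z _ <-]; apply: Hy.
by apply: lb_le_inf; [exists (maxfun f w y), y | move=> _ [z _ <-]; apply: Hy].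
Qed.


Lemma Dsmall (ws : 'I_m -> R) (w : nat -> 'I_m -> R) :
  (forall i, (fun k => w k i) @ \oo --> ws i) ->
  forall e : R, 0 < e -> exists N, forall k, (N <= k)%N -> \sum_i `|w k i - ws i| <= e.
Proof.
move=> Hw e e0.
have em : 0 < e / m%:R by rewrite divr_gt0 // ltr0n.
have ex i : exists N, forall k, (N <= k)%N -> `|ws i - w k i| < e / m%:R.
  by have := (cvgrPdist_lt _ _).1 (Hw i) _ em; move=> [N _ HN]; exists N.
have [Nf HNf] := choice ex.
exists (\max_i Nf i) => k Hk.
apply: (le_trans (y := \sum_(i < m) (e / m%:R))).
  apply: ler_sum => i _; rewrite distrC; apply: ltW; apply: HNf.
  by apply: leq_trans Hk; apply: leq_bigmax.
rewrite sumr_const card_ord.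
have -> : e / m%:R *+ m = e / m%:R * m%:R by rewrite mulr_natr.
by rewrite divfK // pnatr_eq0 -lt0n.
Qed.

Lemma kk_ge (kk : nat -> nat) : (forall n, (kk n < kk n.+1)%N) -> forall n, (n <= kk n)%N.
Proof. by move=> H; elim=> // n IH; apply: leq_ltn_trans IH (H n). Qed.

End Main.
Theorem mainTheorem4 (R : realType) (V : completeNormedModType R)
  (ip : V -> V -> R) (m : nat) (f : 'I_m -> V -> R) :
  is_hilbert_inner ip ->
  (0 < m)%N ->
  (forall i, convex_fun (f i)) ->
  (forall i, cont_diff (f i)) ->
  (forall w : 'I_m -> R, Sset f w !=set0) ->
  growth_uniform f ->
  forall (ws : 'I_m -> R) (w : nat -> 'I_m -> R),
    (forall i, (fun k => w k i) @ \oo --> ws i) ->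
    mosco_cvg ip (fun k => Sset f (w k)) (Sset f ws).
Proof.
move=> Hip m0 Hconv Hdiff Hne Hgr ws w Hw.
pose D k := \sum_i `|w k i - ws i|.
have D0 k : 0 <= D k by apply: sumr_ge0 => i _; exact: normr_ge0.
have clo1 k z : maxfun f (w k) z <= maxfun f ws z + D k by apply: mf_close.
have clo2 k z : maxfun f ws z <= maxfun f (w k) z + D k.
  have := mf_close m f m0 ws (w k) z; congr (_ <= _ + _).
  by apply: eq_bigr => i _; rewrite distrC.
have HD := Dsmall m m0 ws w Hw.
split.
- move=> xs Hxs.
  have [psi [p0 pge pinc Hg]] := Hgr ws.
  pose ds k := distset xs (Sset f (w k)).
  have dsge k : 0 <= ds k.
    have [y Hy] := Hne (w k).
    apply: lb_le_inf; first by exists `|xs - y|, y.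
    by move=> _ [z _ <-]; exact: normr_ge0.
  have Gk k : psi (ds k) <= 2 * D k.
    have [y Hy] := Hne (w k).
    have := Hg w Hw xs Hxs k; rewrite (infval_min m f (w k) y Hy) => H.
    have := clo1 k xs; have := clo2 k y; have := Hxs y; rewrite /ds; lra.
  have ex k : exists y, Sset f (w k) y /\ `|xs - y| < ds k + k.+1%:R^-1.
    have [y0 Hy0] := Hne (w k).
    have : ds k < ds k + k.+1%:R^-1 by rewrite ltrDl invr_gt0 ltr0n.
    by move/inf_lt => [|_ [y Hy <-] H]; [exists `|xs - y0|, y0 | exists y].
  have [uu Huu] := choice ex.
  exists uu; first by move=> k; case: (Huu k).
  apply/cvgrPdist_lt => e e0.
  have e2 : 0 < e / 2 by rewrite divr_gt0.
  have ps0 : 0 < psi (e / 2) by rewrite -p0; apply: pinc.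
  have ps4 : 0 < psi (e / 2) / 4 by rewrite divr_gt0.
  have [N1 HN1] := HD _ ps4.
  have [N2 HN2] := @small_inv _ _ e2.
  exists (maxn N1 N2) => // k /= Hk.
  have hk1 : D k <= psi (e / 2) / 4 by apply: HN1; apply: leq_trans Hk; apply: leq_maxl.
  have hk2 := HN2 k (leq_trans (leq_maxr _ _) Hk).
  have dk : ds k < e / 2.
    rewrite ltNge; apply/negP => H.
    have : psi (e / 2) <= psi (ds k).
      move: H; rewrite le_eqVlt => /orP[/eqP -> // | H]; apply/ltW/pinc => //; lra.
    have := Gk k; lra.
  have [_ Hlt] := Huu k.
  move: Hlt hk2; move: (k.+1%:R^-1) => ek; lra.
- move=> kk u x kinc Hu Hweak z.
  have [i [Hi _]] := mf_ex m f m0 ws x.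
  have [dfi _] := Hdiff i; have dfx := dfi x.
  have cL : continuous ('d (f i) x) := diff_continuous dfx.
  have := (linear_boundedP ('d (f i) x)).1 ((linear_bounded_continuous ('d (f i) x)).2 cL).
  move=> [M0 [_ HM]].
  have HMb := HM (M0 + 1) ltac:(by rewrite ltrDl).
  have [g Hg] : exists g, forall h, 'd (f i) x h = ip g h.
    apply: (@riesz R V ip Hip ('d (f i) x) (M0 + 1)).
    - by move=> a b; exact: linearD.
    - by move=> a y; exact: linearZ.
    - by move=> y; exact: HMb.
  apply/ler_addgt0Pr => e e0.
  have e2 : 0 < e / 2 by rewrite divr_gt0.
  have e4 : 0 < e / 4 by rewrite divr_gt0.
  have [N1 HN1] := HD _ e4.
  have := (cvgrPdist_lt _ _).1 (Hweak g) _ e2; move=> [N2 _ HN2].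
  pose n := maxn N1 N2.
  have hk1 : D (kk n) <= e / 4.
    apply: HN1; apply: (leq_trans _ (kk_ge kk kinc n)); apply: leq_maxl.
  have hk2 := HN2 n (leq_maxr _ _).
  have ha := @conv_grad R V (f i) x (u n) (Hconv i) dfx.
  rewrite Hg (ipBr ip Hip) (ipC ip Hip g) (ipC ip Hip g) in ha.
  have hb := mf_ge m f m0 ws (u n) i.
  have hc := clo2 (kk n) (u n).
  have hd := Hu n z.
  have he := clo1 (kk n) z.
  have hn := ler_norm (ip x g - ip (u n) g).
  rewrite Hi; move: hk2 => /= hk2.
  lra.
Qed.
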